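(* Let $k\ge 5$ and let $G=(V,E)$ be the cycle graph of the cycle $C=(v_0,\ldots,v_{k-1})$, i.e. $V=V(C)$ and $E=\textnormal{ext}(C)$. Then the inequality $$\sum_{f\in\{\{v_i,v_j\}\in E^c:\ d_C(v_i,v_j)=2\}}x_f\ \ge\ 2$$ is valid and facet-defining for $\textnormal{conv}(X(G))$.
   Context: $\textnormal{ext}(C)=\{\{v_{i-1},v_i\}\}_{i=1}^{k-1}\cup\{\{v_{k-1},v_0\}\}$, $E^c=\binom{V}{2}\setminus E$. For $i<j$, $d_C(v_i,v_j)=\min\{j-i,\,k-j+i\}$, and $d_C(v_j,v_i)=d_C(v_i,v_j)$. For $x\in\{0,1\}^{E^c}$, $E(x)=\{f:x_f=1\}$ and $X(G)=\{x\in\{0,1\}^{E^c}:(V,E\cup E(x))\text{ is chordal}\}$; a graph is chordal if every cycle with at least four vertices has a chord. *)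

(* Defs.v *)
From mathcomp Require Import all_boot all_order all_algebra.
Set Implicit Arguments. Unset Strict Implicit. Unset Printing Implicit Defensive.
Import Order.TTheory GRing.Theory Num.Theory.

Definition cyc_adj (k : nat) (u v : 'I_k) : bool :=
  (v == (u.+1 %% k) :> nat) || (u == (v.+1 %% k) :> nat).

Definition dC (k : nat) (u v : 'I_k) : nat :=
  let d := if u <= v then v - u else u - v in minn d (k - d).

Definition EcSet (k : nat) : {set {set 'I_k}} :=
  [set e : {set 'I_k} | [exists u, exists v,
     [&& u != v, e == [set u; v] & ~~ cyc_adj u v]]].

Definition Ec (k : nat) := {e : {set 'I_k} | e \in EcSet k}.

(* Edge relation of (V, E ∪ E(x)) for x ∈ {0,1}^{E^c}. *)
Definition adjx (k : nat) (x : {ffun Ec k -> bool}) (u v : 'I_k) : bool :=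
  (u != v) && (cyc_adj u v || [exists f : Ec k, (val f == [set u; v]) && x f]).

(* A cycle is a duplicate-free sequence s (size >= 4) of vertices with
   consecutive entries (cyclically) adjacent; a chord is an edge between two
   vertices of the cycle that are not cyclically consecutive in it. *)
Definition chordal (T : finType) (adj : rel T) : Prop :=
  forall s : seq T, uniq s -> 4 <= size s -> cycle adj s ->
    exists u v, [/\ u \in s, v \in s, adj u v, v != next s u & u != next s v].

Section Poly.
Local Open Scope ring_scope.
Variable R : realFieldType.
Variable k : nat.
Local Notation pt := {ffun Ec k -> R}.

Definition XG : pt -> Prop := fun p =>
  exists x : {ffun Ec k -> bool},
    p = [ffun f => (x f)%:R] /\ chordal (adjx x).

Definition conv (S : pt -> Prop) : pt -> Prop := fun y =>
  exists n (lam : 'I_n -> R) (q : 'I_n -> pt),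
    [/\ forall i, S (q i), forall i, 0 <= lam i, \sum_i lam i = 1 &
        forall f, y f = \sum_i lam i * q i f].

Definition aff_indep n (q : 'I_n -> pt) : Prop :=
  forall mu : 'I_n -> R, \sum_i mu i = 0 -> (forall f, \sum_i mu i * q i f = 0) ->
    forall i, mu i = 0.

Definition has_dim (P : pt -> Prop) (d : nat) : Prop :=
  (exists q : 'I_d.+1 -> pt, (forall i, P (q i)) /\ aff_indep q) /\
  (forall q : 'I_d.+2 -> pt, (forall i, P (q i)) -> ~ aff_indep q).

Definition dist2 (f : Ec k) : bool :=
  [exists u, exists v, (val f == [set u; v]) && (dC u v == 2%N)].

Definition lhs (y : pt) : R := \sum_(f : Ec k | dist2 f) y f.

Definition valid_ineq (P : pt -> Prop) (a : pt -> R) (b : R) : Prop :=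
  forall y, P y -> b <= a y.

Definition facet_defining (P : pt -> Prop) (a : pt -> R) (b : R) : Prop :=
  valid_ineq P a b /\
  exists d, has_dim P d.+1 /\ has_dim (fun y => P y /\ a y = b) d.
End Poly.

(* Main.v *)
Require Import Defs.
From mathcomp Require Import all_boot all_order all_algebra zify.
Set Implicit Arguments. Unset Strict Implicit. Unset Printing Implicit Defensive.

Lemma seq_argmin (T : eqType) (rk : T -> nat) x s :
  exists2 v, v \in x :: s & forall y, y \in x :: s -> rk v <= rk y.
Proof.
elim: s x => [|y s IH] x.
  by exists x; rewrite ?inE // => y; rewrite inE => /eqP ->.
have [v vin vmin] := IH y.
case: (leqP (rk x) (rk v)) => h.
  exists x; first by rewrite inE eqxx.
  move=> z; rewrite inE => /orP[/eqP -> //|/vmin]; exact: leq_trans.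
exists v; first by rewrite inE vin orbT.
move=> z; rewrite inE => /orP[/eqP -> |/vmin //]; exact: ltnW.
Qed.

Lemma chordal_peo (T : finType) (adj : rel T) (rk : T -> nat) :
  (forall v a b, adj a v -> adj v b -> a != b -> rk v <= rk a -> rk v <= rk b -> adj a b) ->
  chordal adj.
Proof.
move=> H s us ss cs.
case: s us ss cs => [//|x0 s0] us ss cs.
have [v vin vmin] := seq_argmin rk x0 s0.
move: vin vmin; set s := x0 :: s0 => vin vmin.
case: (rot_to vin) => i t ht.
have ut : uniq (v :: t) by rewrite -ht rot_uniq.
have ct : cycle adj (v :: t) by rewrite -ht rot_cycle.
have st : size (v :: t) = size s by rewrite -ht size_rot.
have mt y : (y \in v :: t) = (y \in s) by rewrite -ht mem_rot.
have nt y : next (v :: t) y = next s y by rewrite -ht next_rot.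
case: t ht ut ct st mt nt => [|b [|c [|d t3]]] ht ut ct st mt nt; try by rewrite -st in ss.
set a := last d t3.
have ain : a \in d :: t3 by exact: mem_last.
move: (ut); rewrite [uniq _]/= => /and4P[hv hb hc _].
have ain2 : a \in [:: b, c, d & t3] by rewrite in_cons in_cons ain !orbT.
have ain1 : a \in [:: c, d & t3] by rewrite in_cons ain !orbT.
have av : a != v by apply/negP => /eqP e; move: hv; rewrite -e ain2.
have ab : a != b by apply/negP => /eqP e; move: hb; rewrite -e ain1.
have ac : a != c by apply/negP => /eqP e; move: hc; rewrite -e ain.
have vb : v != b by apply/negP => /eqP e; move: hv; rewrite -e !inE eqxx.
move: ct; rewrite /cycle rcons_path => /andP[pth lst].
move: pth => /= /andP[hvb _].
have hav : adj a v by move: lst; rewrite /= -/a.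
have hab : adj a b.
  apply: (H v a b hav hvb ab); apply: vmin; rewrite -mt.
    by rewrite in_cons ain2 orbT.
  by rewrite !inE eqxx orbT.
exists a, b; split.
- by rewrite -mt in_cons ain2 orbT.
- by rewrite -mt !inE eqxx orbT.
- exact: hab.
- change (b != next (x0 :: s0) a); rewrite -nt.
  have -> : next [:: v, b, c, d & t3] a = v.
    rewrite next_nth in_cons ain2 orbT /=.
    have := index_last ut; rewrite /= -/a => ->.
    by rewrite nth_default.
  by rewrite eq_sym.
- change (a != next (x0 :: s0) b); rewrite -nt next_nth !inE eqxx orbT /=.
  by rewrite (negbTE vb) eqxx /=.
Qed.

Section Cyc.
Variable k : nat.
Hypothesis k5 : 4 < k.

Lemma k0 : 0 < k. Proof. lia. Qed.
Definition w (t : nat) : 'I_k := Ordinal (ltn_pmod t k0).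

Lemma wE t : t < k + k -> (w t : nat) = if t < k then t else t - k.
Proof.
move=> h; rewrite /=; case: ifP => h2; first by rewrite modn_small.
have ht : t = (t - k) + k by lia.
by rewrite {1}ht modnDr modn_small //; lia.
Qed.

Lemma cycE (u v : 'I_k) : cyc_adj u v = [|| (v:nat) == (u:nat) + 1, (u:nat) == (v:nat) + 1,
   ((u:nat) == k - 1) && ((v:nat) == 0) | ((v:nat) == k - 1) && ((u:nat) == 0)].
Proof.
rewrite /cyc_adj.
have m (t : 'I_k) : t.+1 %% k = if t.+1 < k then t.+1 else 0.
  case: ltnP => h; first by rewrite modn_small.
  have -> : t.+1 = k by have := ltn_ord t; lia.
  by rewrite modnn.
rewrite !m; have := ltn_ord u; have := ltn_ord v.
case: ifP; case: ifP => *; apply/idP/idP; lia.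
Qed.

Lemma dCE (u v : 'I_k) : (dC u v == 2) = [|| (v:nat) == (u:nat) + 2, (u:nat) == (v:nat) + 2,
   (v:nat) + k == (u:nat) + 2 | (u:nat) + k == (v:nat) + 2].
Proof.
rewrite /dC; have := ltn_ord u; have := ltn_ord v.
case: ifP => *; apply/idP/idP; lia.
Qed.


Lemma wE1 t : t < k -> (w t : nat) = t.
Proof. by move=> h; rewrite /= modn_small. Qed.
Lemma wE2 t : k <= t -> t < k + k -> (w t : nat) = t - k.
Proof. by move=> h1 h2; rewrite wE // ifF //; apply/negbTE; rewrite -leqNgt. Qed.

Ltac unw := repeat (first [ rewrite wE1; last by lia | rewrite wE2; [|by lia|by lia] | rewrite wE; last by lia ]).
Ltac ifs := repeat (first [case: ifP => ? | match goal with H : context[if _ then _ else _] |- _ => move: H end]).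

Lemma dC_sym (u v : 'I_k) : dC u v = dC v u.
Proof. rewrite /dC; have := ltn_ord u; have := ltn_ord v; ifs; lia. Qed.

Lemma inEc (u v : 'I_k) : u != v -> ~~ cyc_adj u v -> [set u; v] \in EcSet k.
Proof.
move=> uv nc; rewrite inE; apply/existsP; exists u; apply/existsP; exists v.
by rewrite uv eqxx nc.
Qed.

Lemma e0P : [set w 0; w 2] \in EcSet k.
Proof.
apply: inEc; first by rewrite -val_eqE /= !modn_small //; lia.
rewrite cycE /= !modn_small; lia.
Qed.

Definition e0 : Ec k := exist _ [set w 0; w 2] e0P.
Definition mkE (u v : 'I_k) : Ec k := insubd e0 [set u; v].

Lemma mkEv u v : u != v -> ~~ cyc_adj u v -> val (mkE u v) = [set u; v].
Proof. by move=> uv nc; rewrite /mkE insubdK // inEc. Qed.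

Lemma mkEC u v : mkE u v = mkE v u.
Proof. by rewrite /mkE setUC. Qed.

Lemma set2_eqn (a b c d : 'I_k) : [set a; b] = [set c; d] ->
  ((a:nat) = c /\ (b:nat) = d) \/ ((a:nat) = d /\ (b:nat) = c).
Proof.
move=> E; have h x : (x \in [set a; b]) = (x \in [set c; d]) by rewrite E.
move: (h a) (h b) (h c) (h d); rewrite !in_set2 !eqxx /= ?orbT -!val_eqE /=.
move=> *; lia.
Qed.

Lemma set2_eq (a b c d : 'I_k) : [set a; b] = [set c; d] -> (a = c /\ b = d) \/ (a = d /\ b = c).
Proof.
by move/set2_eqn => [[/val_inj -> /val_inj ->]|[/val_inj -> /val_inj ->]]; [left|right].
Qed.

Lemma EcP (f : Ec k) : exists u v, [/\ u != v, ~~ cyc_adj u v & f = mkE u v].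
Proof.
case: f => e he; have he2 := he; rewrite inE in he2.
move: he2 => /existsP[u /existsP[v /and3P[uv /eqP ee nc]]].
by exists u, v; split => //; apply: val_inj; rewrite mkEv.
Qed.

Lemma adjxE x (u v : 'I_k) : adjx x u v = (u != v) && (cyc_adj u v || x (mkE u v)).
Proof.
rewrite /adjx; case: (eqVneq u v) => //= uv.
case: (boolP (cyc_adj u v)) => //= nc.
apply/existsP/idP.
  by case=> f /andP[/eqP hf xf]; have -> : mkE u v = f by apply: val_inj; rewrite mkEv.
by move=> xf; exists (mkE u v); rewrite mkEv // eqxx xf.
Qed.

Lemma adjx_sym x (u v : 'I_k) : adjx x u v = adjx x v u.
Proof. by rewrite !adjxE [v == u]eq_sym [mkE v u]mkEC; congr (_ && (_ || _)); rewrite /cyc_adj orbC. Qed.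

Lemma dist2E u v : u != v -> ~~ cyc_adj u v -> dist2 (mkE u v) = (dC u v == 2).
Proof.
move=> uv nc; apply/existsP/idP.
  case=> u' /existsP[v' /andP[/eqP h d]]; move: h; rewrite mkEv // => h.
  by case: (set2_eq h) => [[-> ->]|[-> ->]] //; rewrite dC_sym.
by move=> d; exists u; apply/existsP; exists v; rewrite mkEv // eqxx d.
Qed.


Lemma w_inj a p q : a < k -> p < k -> q < k -> (w (a+p) == w (a+q)) = (p == q).
Proof. move=> *; apply/eqP/eqP => [/(congr1 (@nat_of_ord k))|->//]; unw; ifs; lia. Qed.

Lemma adj_succ x a t : a < k -> t.+1 < k -> adjx x (w (a+t)) (w (a+t.+1)).
Proof.
move=> ha ht; rewrite adjxE w_inj //; last by lia.
rewrite cycE; unw; ifs; apply/andP; split; lia.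
Qed.

Lemma ear_chord a t : a < k -> 0 < t < k.-1 ->
  [/\ w (a + t.-1) != w (a + t.+1), ~~ cyc_adj (w (a + t.-1)) (w (a + t.+1))
    & dC (w (a + t.-1)) (w (a + t.+1)) == 2].
Proof.
move=> ha ht; split.
- by rewrite w_inj; lia.
- by rewrite cycE; unw; ifs; lia.
- by rewrite dCE; unw; ifs; lia.
Qed.

Lemma path_seg x a i n j m : a < k -> i + n < k -> i <= j -> j + m <= i + n ->
  path (adjx x) (w (a + j)) (map (fun t => w (a + t)) (iota j.+1 m)).
Proof.
move=> ha hin; elim: m j => [//|m IH] j hj hjm /=.
rewrite adj_succ //; last by lia.
by rewrite IH //; lia.
Qed.

Lemma ear x (hx : chordal (adjx x)) a (ha : a < k) n : forall i, i + n < k -> 1 < n ->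
  adjx x (w (a+i)) (w (a+(i+n))) ->
  exists t, i < t < i + n /\ adjx x (w (a + t.-1)) (w (a + t.+1)).
Proof.
elim/ltn_ind: n => n IH i hin hn hadj.
case: (eqVneq n 2) => [n2|n3].
  exists i.+1; split; first by lia.
  by move: hadj; rewrite n2 /= addn2.
pose f t := w (a + t).
pose s := map f (iota i n.+1).
have us : uniq s.
  rewrite map_inj_in_uniq ?iota_uniq // => p q; rewrite !mem_iota => hp hq /eqP.
  by rewrite /f w_inj; [move/eqP| lia | lia | lia].
have ss : 4 <= size s by rewrite size_map size_iota; lia.
have lastE : last (f i) (map f (iota i.+1 n)) = f (i + n).
  have gen j m : last (f j) (map f (iota j.+1 m)) = f (j + m).
    by elim: m j => [|m IHm] j /=; [rewrite addn0 | rewrite IHm addSnnS].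
  exact: gen.
have cs : cycle (adjx x) s.
  rewrite /s /= rcons_path lastE (path_seg x ha hin (leqnn i) (leqnn _)) /=.
  by rewrite adjx_sym.
have nxt t : i <= t <= i + n -> next s (f t) = f (if t < i + n then t.+1 else i).
  move=> ht.
  have ft : f t = nth (f i) s (t - i).
    by rewrite /s (nth_map 0) ?size_iota ?nth_iota; [congr f; lia|lia|lia].
  have fin : f t \in s by rewrite ft mem_nth // size_map size_iota; lia.
  rewrite next_nth fin.
  rewrite [index _ _](_ : _ = t - i); last by rewrite ft index_uniq // size_map size_iota; lia.
  rewrite /s /=.
  case: ifP => h.
    by rewrite (nth_map 0) ?size_iota ?nth_iota; [congr f; lia|lia|lia].
  by rewrite nth_default // size_map size_iota; lia.
have claim p q : i <= p -> p < q -> q <= i + n -> adjx x (f p) (f q) ->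
    f q != next s (f p) -> f p != next s (f q) ->
    exists t, i < t < i + n /\ adjx x (w (a + t.-1)) (w (a + t.+1)).
  move=> hp hpq hq hpq' n1 n2.
  have e1 : next s (f p) = f p.+1 by rewrite nxt ?ifT //; lia.
  have h2 : 1 < q - p by move: n1; rewrite e1 /f w_inj; lia.
  have h3 : q - p < n.
    case: (ltnP q (i + n)) => h; first by lia.
    move: n2; rewrite nxt; last by lia.
    rewrite ifF; last by apply/negbTE; lia.
    by rewrite /f w_inj; lia.
  have [t [ht1 ht2]] := IH (q - p) h3 p ltac:(lia) h2 ltac:(by rewrite subnKC //; lia).
  by exists t; split => //; lia.
have [u [v [us' vs' huv hn1 hn2]]] := hx s us ss cs.
case/mapP: us' => p1; rewrite mem_iota => hp hu.
case/mapP: vs' => q1; rewrite mem_iota => hq hv.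
subst u v.
case: (ltngtP p1 q1) => hpq.
- by apply: (claim p1 q1) => //; lia.
- by apply: (claim q1 p1) => //; [lia | lia | rewrite adjx_sym].
- by move: huv; rewrite adjxE hpq eqxx.
Qed.


Lemma ear_x x a t : a < k -> 0 < t < k.-1 -> adjx x (w (a + t.-1)) (w (a + t.+1)) ->
  dist2 (mkE (w (a + t.-1)) (w (a + t.+1))) && x (mkE (w (a + t.-1)) (w (a + t.+1))).
Proof.
move=> ha ht hadj; have [h1 h2 h3] := ear_chord ha ht.
rewrite dist2E // h3 /=.
by move: hadj; rewrite adjxE h1 (negbTE h2).
Qed.

Ltac dd := repeat match goal with
 | H : is_true (_ || _) |- _ => case/orP: H => H
 | H : is_true (_ && _) |- _ => let H' := fresh in case/andP: H => H' H
 | H : is_true (?x == ?y) |- _ => move/eqP: H => H; subst x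
 end.

Ltac neqw := apply/eqP => /(congr1 (@nat_of_ord _)); unw; ifs; lia.

Lemma valid2 x : chordal (adjx x) -> 1 < #|[pred f : Ec k | dist2 f && x f]|.
Proof.
move=> hx.
have [t1 [ht1 hadj1]] : exists t, 0 < t < 0 + k.-1 /\ adjx x (w (0 + t.-1)) (w (0 + t.+1)).
  apply: (ear hx k0); [lia|lia|].
  rewrite adjxE; apply/andP; split; first by neqw.
  by rewrite cycE; unw; ifs; lia.
have t1k : t1 < k by lia.
have [t2 [ht2 hadj2]] : exists t, 0 < t < 0 + k.-1 /\ adjx x (w (t1 + t.-1)) (w (t1 + t.+1)).
  apply: (ear hx t1k); [lia|lia|].
  rewrite adjxE; apply/andP; split; first by neqw.
  by rewrite cycE; unw; ifs; lia.
have ht1' : 0 < t1 < k.-1 by lia.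
have ht2' : 0 < t2 < k.-1 by lia.
have f1 := ear_x k0 ht1' hadj1.
have f2 := ear_x t1k ht2' hadj2.
have [a1 b1 _] := ear_chord k0 ht1'.
have [a2 b2 _] := ear_chord t1k ht2'.
set g1 := mkE _ _ in f1; set g2 := mkE _ _ in f2.
have g12 : g1 != g2.
  apply/negP => /eqP /(congr1 val); rewrite !mkEv //.
  move/set2_eqn; clear -ht1 ht2 k5; unw; ifs; lia.
have : [set g1; g2] \subset [pred f : Ec k | dist2 f && x f].
  by apply/subsetP => f; rewrite !inE => /orP[] /eqP ->.
by move/subset_leq_card; rewrite cards2 g12.
Qed.

Definition cadj p q := [|| q == p+1, p == q+1, (p == k-1) && (q == 0) | (q == k-1) && (p == 0)].
Definition RT m p q := ((p == 1) && (3 <= q <= m.+1)) || ((p == m.+1) && ((m + 3 <= q < k) || (q == 0))).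
Definition Gs m (e : bool) p q := [|| RT m p q, RT m q p, [&& e, p == 0 & q == m] | [&& e, q == 0 & p == m]].
Definition AdjP m e p q := (p != q) && (cadj p q || Gs m e p q).
Definition rkp m p := if p == 0 then k else if p == 1 then k.+1 else if p == m then k.+2 else if p == m.+1 then k.+3 else p.
Lemma rkp_le m p q : 2 <= m -> p < k -> q < k -> rkp m p <= rkp m q ->
  [|| (q == 0) && (p == 0), (q==0) && (p != 1) && (p != m) && (p != m.+1),
      (q == 1) && (p != m) && (p != m.+1), (q == m) && (p != m.+1), q == m.+1 |
      [&& q != 0, q != 1, q != m, q != m.+1, p != 0, p != 1, p != m, p != m.+1 & p <= q]].
Proof.
rewrite /rkp => hm hp hq; repeat case: ifP => ?; lia.
Qed.
Lemma rk_ge m p q : 2 <= m -> p < k -> q < k -> m.+1 < k -> rkp m p <= rkp m q ->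
  if p == 0 then [|| q == 0, q == 1, q == m | q == m.+1]
  else if p == 1 then [|| q == 1, q == m | q == m.+1]
  else if p == m then (q == m) || (q == m.+1)
  else if p == m.+1 then q == m.+1
  else [|| q == 0, q == 1, q == m, q == m.+1 | p <= q].
Proof. rewrite /rkp => h1 h2 h3 h4; ifs; lia. Qed.

Definition LN m (e : bool) p r :=
  if p == 0 then [|| r == 1, r == m.+1 | e && (r == m)]
  else if p == 1 then (r == m) || (r == m.+1)
  else if p == m then r == m.+1
  else if p == m.+1 then false
  else if p < m then (r == p.+1) || (r == 1)
  else (r == (if p.+1 == k then 0 else p.+1)) || (r == m.+1).

Lemma ln m (e : bool) p r : 2 <= m <= k - 3 -> (e -> 3 <= m) -> p < k -> r < k ->
  AdjP m e p r -> rkp m p <= rkp m r -> LN m e p r.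
Proof.
move=> hm he hp hr h1 /rk_ge h4.
have {h4}h4 := h4 ltac:(lia) hp hr ltac:(lia).
move: h1 h4.
case: e he => he; [have {}he := he erefl|].
all: rewrite /AdjP /Gs /RT /cadj /LN /=.
all: ifs; move=> *; lia.
Qed.

Lemma ln_clique m (e : bool) p q r : 2 <= m <= k - 3 -> (e -> 3 <= m) -> p < k -> q < k -> r < k ->
  LN m e p q -> LN m e p r -> q != r -> AdjP m e q r.
Proof.
move=> hm he hp hq hr; case: e he => he; [have {}he := he erefl|].
all: rewrite /LN.
all: case: (eqVneq p 0) => [_|p0]; [ | case: (eqVneq p 1) => [_|p1]; [ | case: (eqVneq p m) => [_|pm]; [ | case: (eqVneq p m.+1) => [_|pm1]]]].
all: rewrite /=.
all: ifs; move=> H1 H2 H3; dd.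
all: rewrite /AdjP /Gs /RT /cadj /=; lia.
Qed.

Lemma perm4 (a b c d : bool) : [|| a, b, c | d] = [|| b, a, d | c].
Proof. by case: a; case: b; case: c; case: d. Qed.

Lemma AdjP_sym m e p q : AdjP m e p q = AdjP m e q p.
Proof. by rewrite /AdjP /Gs /cadj eq_sym; congr (_ && (_ || _)); apply: perm4. Qed.

Lemma peo_nat m (e : bool) p q r : 2 <= m <= k - 3 -> (e -> 3 <= m) -> p < k -> q < k -> r < k ->
  AdjP m e q p -> AdjP m e p r -> q != r -> rkp m p <= rkp m q -> rkp m p <= rkp m r -> AdjP m e q r.
Proof.
move=> hm he hp hq hr h1 h2 h3 h4 h5.
apply: (ln_clique hm he hp hq hr _ _ h3).
  by apply: (ln hm he hp hq) => //; rewrite AdjP_sym.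
exact: (ln hm he hp hr).
Qed.

Definition d2 p q := [|| q == p + 2, p == q + 2, q + k == p + 2 | p + k == q + 2].
Definition Dset m p q := [|| (p == 1) && (q == 3), (p == 3) && (q == 1),
   [&& p == m.+1, m + 3 < k & q == m + 3], [&& p == m.+1, m + 3 == k & q == 0],
   [&& q == m.+1, m + 3 < k & p == m + 3] | [&& q == m.+1, m + 3 == k & p == 0]].

Lemma dcount m (e : bool) p q : 2 <= m <= k - 3 -> (e -> 3 <= m) -> p < k -> q < k ->
  (d2 p q && Gs m e p q) = Dset m p q.
Proof.
move=> hm he hp hq; case: e he => he; [have {}he := he erefl|].
all: rewrite /d2 /Gs /RT /Dset /=.
all: apply/idP/idP => H; dd.
all: lia.
Qed.

Definition pos (a : nat) (u : 'I_k) : nat := if a <= u then u - a else u + k - a.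

Lemma pos_lt a u : a < k -> pos a u < k.
Proof. by rewrite /pos; have := ltn_ord u; ifs; lia. Qed.

Lemma w_pos a u : a < k -> w (a + pos a u) = u.
Proof.
move=> ha; apply: val_inj; change ((w (a + pos a u) : nat) = u); rewrite /pos.
have := ltn_ord u; case: ifP => h hu; unw; ifs; lia.
Qed.

Lemma pos_w a p : a < k -> p < k -> pos a (w (a + p)) = p.
Proof. by move=> ha hp; rewrite /pos; unw; ifs; lia. Qed.

Lemma wpos_ex a u : a < k -> exists2 p, p < k & u = w (a + p).
Proof. by move=> ha; exists (pos a u); [apply: pos_lt | rewrite w_pos]. Qed.

Lemma cyc_pos a p q : a < k -> p < k -> q < k -> cyc_adj (w (a+p)) (w (a+q)) = cadj p q.
Proof. move=> ha hp hq; rewrite cycE /cadj; unw; ifs; apply/idP/idP => H; dd; lia. Qed.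

Lemma dC_pos a p q : a < k -> p < k -> q < k -> (dC (w (a+p)) (w (a+q)) == 2) = d2 p q.
Proof. move=> ha hp hq; rewrite dCE /d2; unw; ifs; apply/idP/idP => H; dd; lia. Qed.

Lemma Gs_sym m e p q : Gs m e p q = Gs m e q p.
Proof. by rewrite /Gs perm4. Qed.

Definition xT a m e : {ffun Ec k -> bool} :=
  [ffun f => [exists u, exists v, (val f == [set u; v]) && Gs m e (pos a u) (pos a v)]].

Lemma xT_mkE a m e u v : u != v -> ~~ cyc_adj u v -> xT a m e (mkE u v) = Gs m e (pos a u) (pos a v).
Proof.
move=> uv nc; rewrite ffunE mkEv //; apply/existsP/idP.
  case=> u' /existsP[v' /andP[/eqP h g]].
  by case: (set2_eq h) => [[-> ->]|[-> ->]] //; rewrite Gs_sym.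
by move=> g; exists u; apply/existsP; exists v; rewrite eqxx g.
Qed.

Lemma adj_xT a m e p q : a < k -> p < k -> q < k ->
  adjx (xT a m e) (w (a+p)) (w (a+q)) = AdjP m e p q.
Proof.
move=> ha hp hq; rewrite adjxE w_inj // cyc_pos // /AdjP.
case: (eqVneq p q) => //= pq; case: (boolP (cadj p q)) => //= nc.
by rewrite xT_mkE ?w_inj ?cyc_pos // !pos_w.
Qed.

Lemma chordal_xT a m (e : bool) : a < k -> 2 <= m <= k - 3 -> (e -> 3 <= m) -> chordal (adjx (xT a m e)).
Proof.
move=> ha hm he.
apply: (chordal_peo (rk := fun u => rkp m (pos a u))) => v b c.
have [p hp ->] := wpos_ex v ha.
have [q hq ->] := wpos_ex b ha.
have [r hr ->] := wpos_ex c ha.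
rewrite !adj_xT // !pos_w // w_inj //.
exact: peo_nat.
Qed.

Lemma mkE_eq u v u' v' : u != v -> ~~ cyc_adj u v -> u' != v' -> ~~ cyc_adj u' v' ->
  (mkE u v == mkE u' v') = ((u == u') && (v == v')) || ((u == v') && (v == u')).
Proof.
move=> h1 h2 h3 h4; apply/eqP/idP.
  move/(congr1 val); rewrite !mkEv // => /set2_eq [[-> ->]|[-> ->]]; by rewrite !eqxx ?orbT.
by case/orP => /andP[/eqP -> /eqP ->] //; rewrite mkEC.
Qed.


Lemma mkE_w_eq a p q p' q' : a < k -> p < k -> q < k -> p' < k -> q' < k ->
  p != q -> ~~ cadj p q -> p' != q' -> ~~ cadj p' q' ->
  (mkE (w (a+p)) (w (a+q)) == mkE (w (a+p')) (w (a+q'))) = ((p == p') && (q == q')) || ((p == q') && (q == p')).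
Proof.
move=> ha hp hq hp' hq' h1 h2 h3 h4.
by rewrite mkE_eq ?w_inj ?cyc_pos.
Qed.

Definition m3 m := if m + 3 < k then m + 3 else 0.
Definition g1 a := mkE (w (a + 1)) (w (a + 3)).
Definition g2 a m := mkE (w (a + m.+1)) (w (a + m3 m)).

Lemma count_xT a m (e : bool) : a < k -> 2 <= m <= k - 3 -> (e -> 3 <= m) ->
  forall f, (dist2 f && xT a m e f) = (f == g1 a) || (f == g2 a m).
Proof.
move=> ha hm he f.
have [u [v [uv nc ->]]] := EcP f.
have [p hp ep] := wpos_ex u ha; have [q hq eq] := wpos_ex v ha; subst u v.
have hpq : p != q by rewrite -(w_inj ha hp hq).
have cpq : ~~ cadj p q by rewrite -(cyc_pos ha hp hq).
rewrite dist2E // xT_mkE // dC_pos // !pos_w // dcount //.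
have m3k : m3 m < k by rewrite /m3; ifs; lia.
rewrite /g1 /g2 !mkE_w_eq //; try (rewrite /cadj /m3; ifs; lia); try lia.
by rewrite /Dset /m3; clear -hm hp hq k5; ifs; apply/idP/idP => H; dd; lia.
Qed.

Lemma g12 a m : a < k -> 2 <= m <= k - 3 -> g1 a != g2 a m.
Proof.
move=> ha hm; have m3k : m3 m < k by rewrite /m3; ifs; lia.
rewrite /g1 /g2 !mkE_w_eq //; try (rewrite /cadj /m3; ifs; lia); try lia.
Qed.

Lemma card_xT a m (e : bool) : a < k -> 2 <= m <= k - 3 -> (e -> 3 <= m) ->
  #|[pred f : Ec k | dist2 f && xT a m e f]| = 2.
Proof.
move=> ha hm he.
have := cards2 (g1 a) (g2 a m); rewrite (g12 ha hm) => <-.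
by apply: eq_card => f; rewrite !inE count_xT.
Qed.

Definition Fc a m := mkE (w (a + 0)) (w (a + m)).

Lemma xT_true a m : a < k -> 3 <= m <= k - 3 ->
  forall f, xT a m true f = xT a m false f || (f == Fc a m).
Proof.
move=> ha hm f.
have [u [v [uv nc ->]]] := EcP f.
have [p hp ep] := wpos_ex u ha; have [q hq eq] := wpos_ex v ha; subst u v.
have hpq : p != q by rewrite -(w_inj ha hp hq).
have cpq : ~~ cadj p q by rewrite -(cyc_pos ha hp hq).
rewrite !xT_mkE // !pos_w // /Fc mkE_w_eq //; try (rewrite /cadj; lia); try lia.
by rewrite /Gs /=; case: (RT m p q); case: (RT m q p); case: (p==0); case: (q==m); case: (p==m); case: (q==0).
Qed.

Lemma Fc_not a m : a < k -> 3 <= m <= k - 3 -> ~~ xT a m false (Fc a m) /\ ~~ dist2 (Fc a m).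
Proof.
move=> ha hm.
have h1 : w (a + 0) != w (a + m) by rewrite w_inj; lia.
have h2 : ~~ cyc_adj (w (a + 0)) (w (a + m)) by rewrite cyc_pos /cadj; lia.
rewrite /Fc xT_mkE // dist2E //. rewrite dC_pos //; try lia. rewrite (pos_w ha) //; try lia. rewrite (pos_w ha) //; try lia.
by rewrite /Gs /RT /d2; split; lia.
Qed.

Lemma nonD_Fc f : ~~ dist2 f -> exists a m, [/\ a < k, 3 <= m <= k - 3 & f = Fc a m].
Proof.
have k0' := k0.
have [u [v [uv nc ->]]] := EcP f.
have hu := ltn_ord u.
have [q hq eq] := wpos_ex v hu; subst v.
have eu : w (u + 0) = u by apply: val_inj => /=; rewrite addn0 modn_small.
move=> nd.
have uv' : w (u + 0) != w (u + q) by rewrite eu.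
have nc' : ~~ cyc_adj (w (u + 0)) (w (u + q)) by rewrite eu.
have nd' : ~~ (dC (w (u + 0)) (w (u + q)) == 2) by rewrite eu -dist2E.
rewrite dC_pos // in nd'; rewrite w_inj // in uv'; rewrite cyc_pos // in nc'.
exists u, q; split => //; last by rewrite /Fc eu.
by move: uv' nc' nd'; rewrite /cadj /d2; clear -hq k5; lia.
Qed.

Definition Dc (c : 'I_k) := mkE (w (c + (k - 1))) (w (c + 1)).

Lemma w_eqv s t : s < k + k -> t < k + k ->
  (if s < k then s else s - k) = (if t < k then t else t - k) -> w s = w t.
Proof. by move=> hs ht h; apply: val_inj; change ((w s : nat) = w t); rewrite !wE. Qed.

Lemma D_Dc f : dist2 f -> exists c, f = Dc c.
Proof.
have k0' := k0.
have [u [v [uv nc ->]]] := EcP f.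
have hu := ltn_ord u.
have [q hq eq] := wpos_ex v hu; subst v.
have eu : w (u + 0) = u by apply: val_inj => /=; rewrite addn0 modn_small.
move=> d.
have uv' : w (u + 0) != w (u + q) by rewrite eu.
have nc' : ~~ cyc_adj (w (u + 0)) (w (u + q)) by rewrite eu.
have d' : dC (w (u + 0)) (w (u + q)) == 2 by rewrite eu -dist2E.
rewrite dC_pos // in d'; rewrite -[X in mkE X _]eu.
have [q2|q2] : q = 2 \/ q = k - 2 by move: d'; rewrite /d2; clear -hq; lia.
- exists (w (u + 1)); rewrite /Dc; subst q.
  have hc := ltn_ord (w (u + 1)).
  congr mkE; apply: w_eqv; try lia; move: hc; unw; ifs; lia.
- exists (w (u + (k - 1))); rewrite /Dc mkEC; subst q.
  have hc := ltn_ord (w (u + (k - 1))).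
  congr mkE; apply: w_eqv; try lia; move: hc; unw; ifs; lia.
Qed.

Lemma g1_Dc a : a < k -> g1 a = Dc (w (a + 2)).
Proof.
move=> ha; have hc := ltn_ord (w (a + 2)).
rewrite /g1 /Dc; congr mkE; apply: w_eqv; try lia; move: hc; unw; ifs; lia.
Qed.

Lemma g2_Dc a m : a < k -> 2 <= m <= k - 3 -> g2 a m = Dc (w (a + m + 2)).
Proof.
move=> ha hm; have hc := ltn_ord (w (a + m + 2)).
rewrite /g2 /Dc /m3; congr mkE; apply: w_eqv; try (ifs; lia); move: hc; unw; ifs; lia.
Qed.


End Cyc.

Import Order.TTheory GRing.Theory Num.Theory.
Local Open Scope ring_scope.

Section LA.
Variable R : realFieldType.
Variable k : nat.
Local Notation pt := {ffun Ec k -> R}.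
Local Notation N := #|{: Ec k}|.

Definition MxI (I : finType) (P : I -> pt) : 'M[R]_(#|I|, N.+1) :=
  \matrix_(i, j) (if unlift ord0 j is Some j' then P (enum_val i) (enum_val j') else 1).

Definition Mx n (q : 'I_n -> pt) : 'M[R]_(n, N.+1) :=
  \matrix_(i, j) (if unlift ord0 j is Some j' then q i (enum_val j') else 1).

Lemma sum_enum (F : Ec k -> R) : \sum_(j < N) F (enum_val j) = \sum_f F f.
Proof. by rewrite -big_enum_val. Qed.

Lemma Mx_ker n (q : 'I_n -> pt) (v : 'rV_n) : v *m Mx q = 0 ->
  \sum_i v 0 i = 0 /\ forall f, \sum_i v 0 i * q i f = 0.
Proof.
move=> h.
have e j : \sum_i v 0 i * Mx q i j = 0.
  by move/matrixP: h => /(_ 0 j); rewrite !mxE.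
split.
  have := e ord0; under eq_bigr do rewrite mxE unlift_none mulr1. done.
move=> f; have := e (lift ord0 (enum_rank f)).
by under eq_bigr do rewrite mxE liftK enum_rankK.
Qed.

Lemma not_indep_rank n (q : 'I_n -> pt) : (\rank (Mx q) < n)%N -> ~ aff_indep q.
Proof.
move=> hr hind.
have hK : kermx (Mx q) != 0.
  by rewrite -mxrank_eq0 mxrank_ker subn_eq0 -ltnNge.
have [i hi] : exists i, row i (kermx (Mx q)) != 0.
  case: (pickP (fun i => row i (kermx (Mx q)) != 0)) => [i hi|h]; first by exists i.
  move: hK; suff -> : kermx (Mx q) = 0 by rewrite eqxx.
  apply/row_matrixP => i; move: (h i) => /negbFE/eqP ->; by rewrite row0.
set v := row i _ in hi.
have hv : v *m Mx q = 0 by rewrite /v -row_mul mulmx_ker row0.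
case: (Mx_ker hv) => h1 h2.
have h0 := hind (fun j => v 0 j) h1 h2.
move: hi; suff -> : v = 0 by rewrite eqxx.
by apply/rowP => j; rewrite h0 mxE.
Qed.

Lemma full_upper n (q : 'I_n -> pt) : (N.+1 < n)%N -> ~ aff_indep q.
Proof.
move=> hn; apply: not_indep_rank; apply: leq_ltn_trans hn; exact: rank_leq_col.
Qed.

Lemma face_upper n (q : 'I_n -> pt) (c : pt) (b : R) : b != 0 ->
  (forall i, \sum_f c f * q i f = b) -> (N < n)%N -> ~ aff_indep q.
Proof.
move=> hb hq hn; apply: not_indep_rank.
pose w : 'cV[R]_(N.+1) := \col_j (if unlift ord0 j is Some j' then c (enum_val j') else - b).
have hw : Mx q *m w = 0.
  apply/matrixP => i j; rewrite !mxE big_ord_recl !mxE unlift_none.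
  under eq_bigr do rewrite !mxE liftK.
  rewrite mul1r (sum_enum (fun f => q i f * c f)).
  under eq_bigr do rewrite mulrC.
  by rewrite hq addNr.
have w0 : w != 0.
  apply/negP => /eqP/matrixP/(_ ord0 ord0); rewrite !mxE unlift_none => /eqP.
  by rewrite oppr_eq0 (negbTE hb).
have := mulmx0_rank_max hw.
have : (0 < \rank w)%N by rewrite lt0n mxrank_eq0.
move=> h1 h2; lia.
Qed.

Lemma extract (I : finType) (P : I -> pt) (c : pt) (b : R) : b != 0 ->
  (forall (a : pt) (a0 : R), (forall i, a0 + \sum_f a f * P i f = 0) ->
     exists l, a0 = - (l * b) /\ forall f, a f = l * c f) ->
  forall n, (n <= N)%N ->
  exists q : 'I_n -> pt, (forall i, exists j, q i = P j) /\ aff_indep q.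
Proof.
move=> hb H n hn.
set M := MxI P.
have hr : (N <= \rank M)%N.
  pose w : 'rV[R]_(N.+1) := \row_j (if unlift ord0 j is Some j' then c (enum_val j') else - b).
  have hK : (kermx M^T <= w)%MS.
    apply/row_subP => r.
    set v := row r _.
    have hv : v *m M^T = 0 by rewrite /v -row_mul mulmx_ker row0.
    clearbody v.
    pose a : pt := [ffun f => v 0 (lift ord0 (enum_rank f))].
    have [l [hl1 hl2]] : exists l, v 0 ord0 = - (l * b) /\ forall f, a f = l * c f.
      apply: H => i.
      move/matrixP: hv => /(_ 0 (enum_rank i)); rewrite !mxE big_ord_recl !mxE unlift_none mulr1.
      rewrite /M /MxI.
      under eq_bigr do rewrite !mxE liftK enum_rankK.
      move=> h; rewrite -[RHS]h; congr (_ + _).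
      rewrite -(sum_enum (fun f => a f * P i f)); apply: eq_bigr => j _.
      by rewrite /a ffunE enum_valK.
    have -> : v = l *: w.
      apply/rowP => j; rewrite /w !mxE.
      case: (unliftP ord0 j) => [j'|] ->.
        by rewrite -hl2 /a ffunE enum_valK.
      by rewrite hl1 mulrN.
    by apply: scalemx_sub.
  have := mxrankS hK; rewrite mxrank_ker mxrank_tr.
  move=> h; have := leq_trans h (rank_leq_row w).
  lia.
have hnr : (n <= \rank M)%N := leq_trans hn hr.
set g := maxrankfun M.
exists (fun i => P (enum_val (g (widen_ord hnr i)))); split; first by move=> i; eexists.
move=> mu hmu1 hmu2.
pose u : 'rV[R]_(\rank M) := \row_j \sum_(i | widen_ord hnr i == j) mu i.
have key (X : 'M[R]_(\rank M, N.+1)) cc : (u *m X) 0 cc = \sum_i mu i * X (widen_ord hnr i) cc.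
  rewrite !mxE.
  under eq_bigr do rewrite mxE big_distrl /= big_mkcond /=.
  rewrite exchange_big /=; apply: eq_bigr => i _.
  rewrite -big_mkcond /=.
  under eq_bigl do rewrite eq_sym.
  by rewrite big_pred1_eq.
have hu : u *m rowsub g M = 0.
  apply/rowP => j; rewrite key mxE.
  under eq_bigr do rewrite !mxE.
  case: (unlift ord0 j) => [j'|].
    by rewrite hmu2.
  by under eq_bigr do rewrite mulr1.
have u0 : u = 0 by apply/eqP; rewrite -(mulmx_free_eq0 _ (maxrowsub_free M)) hu.
move=> i; move/matrixP: u0 => /(_ 0 (widen_ord hnr i)).
rewrite !mxE /=.
have -> : \sum_(i0 | widen_ord hnr i0 == widen_ord hnr i) mu i0 = \sum_(i0 | i0 == i) mu i0.
  by apply: eq_bigl => i0; rewrite -val_eqE /= val_eqE.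
by rewrite big_pred1_eq.
Qed.

Lemma extract0 (I : finType) (P : I -> pt) :
  (forall (a : pt) (a0 : R), (forall i, a0 + \sum_f a f * P i f = 0) ->
     a0 = 0 /\ forall f, a f = 0) ->
  forall n, (n <= N.+1)%N ->
  exists q : 'I_n -> pt, (forall i, exists j, q i = P j) /\ aff_indep q.
Proof.
move=> H n hn.
set M := MxI P.
have hr : (N.+1 <= \rank M)%N.
  pose w : 'rV[R]_(N.+1) := 0.
  have hK : (kermx M^T <= w)%MS.
    apply/row_subP => r.
    set v := row r _.
    have hv : v *m M^T = 0 by rewrite /v -row_mul mulmx_ker row0.
    clearbody v.
    pose a : pt := [ffun f => v 0 (lift ord0 (enum_rank f))].
    have [hl1 hl2] : v 0 ord0 = 0 /\ forall f, a f = 0.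
      apply: H => i.
      move/matrixP: hv => /(_ 0 (enum_rank i)); rewrite !mxE big_ord_recl !mxE unlift_none mulr1.
      rewrite /M /MxI.
      under eq_bigr do rewrite !mxE liftK enum_rankK.
      move=> h; rewrite -[RHS]h; congr (_ + _).
      rewrite -(sum_enum (fun f => a f * P i f)); apply: eq_bigr => j _.
      by rewrite /a ffunE enum_valK.
    have -> : v = w.
      apply/rowP => j; rewrite /w !mxE.
      case: (unliftP ord0 j) => [j'|] ->.
        by rewrite -(hl2 (enum_val j')) /a ffunE enum_valK.
      by rewrite hl1.
    exact: submx_refl.
  have := mxrankS hK; rewrite mxrank_ker mxrank_tr /w mxrank0.
  lia.
have hnr : (n <= \rank M)%N := leq_trans hn hr.
set g := maxrankfun M.
exists (fun i => P (enum_val (g (widen_ord hnr i)))); split; first by move=> i; eexists.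
move=> mu hmu1 hmu2.
pose u : 'rV[R]_(\rank M) := \row_j \sum_(i | widen_ord hnr i == j) mu i.
have key (X : 'M[R]_(\rank M, N.+1)) cc : (u *m X) 0 cc = \sum_i mu i * X (widen_ord hnr i) cc.
  rewrite !mxE.
  under eq_bigr do rewrite mxE big_distrl /= big_mkcond /=.
  rewrite exchange_big /=; apply: eq_bigr => i _.
  rewrite -big_mkcond /=.
  under eq_bigl do rewrite eq_sym.
  by rewrite big_pred1_eq.
have hu : u *m rowsub g M = 0.
  apply/rowP => j; rewrite key mxE.
  under eq_bigr do rewrite !mxE.
  case: (unlift ord0 j) => [j'|].
    by rewrite hmu2.
  by under eq_bigr do rewrite mulr1.
have u0 : u = 0 by apply/eqP; rewrite -(mulmx_free_eq0 _ (maxrowsub_free M)) hu.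
move=> i; move/matrixP: u0 => /(_ 0 (widen_ord hnr i)).
rewrite !mxE /=.
have -> : \sum_(i0 | widen_ord hnr i0 == widen_ord hnr i) mu i0 = \sum_(i0 | i0 == i) mu i0.
  by apply: eq_bigl => i0; rewrite -val_eqE /= val_eqE.
by rewrite big_pred1_eq.
Qed.

End LA.

Section Final.
Variable R : realFieldType.
Variable k : nat.
Hypothesis k5 : (4 < k)%N.
Local Notation pt := {ffun Ec k -> R}.
Local Notation N := #|{: Ec k}|.

Definition ptx (x : {ffun Ec k -> bool}) : pt := [ffun f => (x f)%:R].
Lemma ptxE x f : ptx x f = (x f)%:R.
Proof. by rewrite ffunE. Qed.

Definition cvec : pt := [ffun f => (dist2 f)%:R].

Lemma lhs_ptx x : lhs (ptx x) = (#|[pred f : Ec k | dist2 f && x f]|)%:R.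
Proof.
rewrite /lhs (eq_bigr (fun f => if x f then (1:R) else 0)); last by move=> f _; rewrite ffunE; case: (x f).
rewrite -big_mkcondr /=.
have -> : \sum_(f | dist2 f && x f) (1:R) = \sum_(f in [pred f : Ec k | dist2 f && x f]) 1 by apply: eq_bigl.
by rewrite sumr_const.
Qed.

Lemma lhs_lin (y : pt) : lhs y = \sum_f cvec f * y f.
Proof.
rewrite /lhs big_mkcond; apply: eq_bigr => f _; rewrite ffunE.
by case: (dist2 f); rewrite ?mul1r ?mul0r.
Qed.

Lemma conv_XG (y : pt) : XG y -> conv (@XG R k) y.
Proof.
move=> hy; exists 1%N, (fun _ => 1), (fun _ => y); split.
- by [].
- by move=> i; rewrite ler01.
- by rewrite big_ord1.
- by move=> f; rewrite big_ord1 mul1r.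
Qed.

Lemma valid : valid_ineq (conv (@XG R k)) (@lhs R k) 2%:R.
Proof.
move=> y [n [lam [q [hq hl hs hy]]]].
have -> : lhs y = \sum_i lam i * lhs (q i).
  rewrite lhs_lin.
  under eq_bigr do rewrite hy mulr_sumr.
  rewrite exchange_big /=; apply: eq_bigr => i _.
  rewrite lhs_lin mulr_sumr; apply: eq_bigr => f _.
  by rewrite mulrCA.
have h2 i : 2%:R <= lhs (q i).
  have [x [-> hx]] := hq i.
  by rewrite (lhs_ptx x) ler_nat; apply: valid2.
apply: le_trans (_ : \sum_i lam i * 2%:R <= _).
  by rewrite -mulr_suml hs mul1r.
by apply: ler_sum => i _; apply: ler_wpM2l.
Qed.


Definition validme (m : nat) (e : bool) := (2 <= m <= k - 3)%N && (e ==> (3 <= m)%N).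

Definition xI (i : 'I_k * 'I_k * bool) : {ffun Ec k -> bool} :=
  let: (a, m, e) := i in if validme m e then xT k a m e else xT k a 2 false.

Lemma xI_prop i : chordal (adjx (xI i)) /\ lhs (ptx (xI i)) = 2%:R.
Proof.
case: i => [[a m] e] /=; have ha := ltn_ord a.
case: ifP => hv.
  move: hv; rewrite /validme => /andP[hm he].
  have he' : e -> (3 <= m)%N by move=> he2; rewrite he2 in he.
  by rewrite lhs_ptx card_xT //; split => //; apply: chordal_xT.
have hm : (2 <= 2 <= k - 3)%N by lia.
by rewrite lhs_ptx card_xT //; split => //; apply: chordal_xT.
Qed.

Lemma sum2 (F : Ec k -> R) g1 g2 : g1 != g2 ->
  \sum_f F f * ((f == g1) || (f == g2))%:R = F g1 + F g2.
Proof.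
move=> h; rewrite (bigD1 g1) //= eqxx mulr1 (bigD1 g2) //=; last by rewrite eq_sym.
rewrite eqxx orbT mulr1 big1 ?addr0 // => f /andP[f1 f2].
by rewrite (negbTE f1) (negbTE f2) mulr0.
Qed.

Lemma sum1 (F : Ec k -> R) g : \sum_f F f * (f == g)%:R = F g.
Proof.
rewrite (bigD1 g) //= eqxx mulr1 big1 ?addr0 // => f /negbTE ->.
by rewrite mulr0.
Qed.

Lemma kernel (af : pt) (a0 : R) :
  (forall i, a0 + \sum_f af f * ptx (xI i) f = 0) ->
  exists l, a0 = - (l * 2%:R) /\ forall f, af f = l * cvec f.
Proof.
move=> H.
pose S (x : {ffun Ec k -> bool}) := \sum_f af f * ptx x f.
have hT a m (e : bool) : (a < k)%N -> (2 <= m <= k - 3)%N -> (e -> 3 <= m)%N -> a0 + S (xT k a m e) = 0.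
  move=> ha hm he.
  have hmk : (m < k)%N by lia.
  have := H (Ordinal ha, Ordinal hmk, e); rewrite /xI /= /validme hm /=.
  by case: e he => [he|_]; rewrite ?he.
have step1 a m : (a < k)%N -> (3 <= m <= k - 3)%N -> af (Fc k5 a m) = 0.
  move=> ha hm.
  have [n1 n2] := Fc_not k5 ha hm.
  have e1 : S (xT k a m true) = S (xT k a m false) + af (Fc k5 a m).
    rewrite /S (eq_bigr (fun f => af f * ptx (xT k a m false) f + af f * (f == Fc k5 a m)%:R)).
      by rewrite big_split /= sum1.
    move=> f _; rewrite !ptxE (xT_true k5 ha hm) -mulrDr; congr (_ * _).
    case: eqP => [->|_]; first by rewrite (negbTE n1) /= add0r.
    by rewrite orbF addr0.
  have h1 := hT a m true ha ltac:(lia) (fun _ => proj1 (andP hm)).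
  have h2 := hT a m false ha ltac:(lia) (fun h => ltac:(done)).
  by move: h1; rewrite e1 addrA h2 add0r.
have step2 f : ~~ dist2 f -> af f = 0.
  by move/(nonD_Fc k5) => [a [m [ha hm ->]]]; apply: step1.
have step3 a m : (a < k)%N -> (2 <= m <= k - 3)%N -> a0 + (af (g1 k5 a) + af (g2 k5 a m)) = 0.
  move=> ha hm; have he : false -> (3 <= m)%N by [].
  rewrite -(sum2 af (g12 k5 ha hm)) -[RHS](hT a m false ha hm he).
  congr (_ + _); rewrite /S; apply: eq_bigr => f _; rewrite ptxE -(count_xT k5 ha hm he).
  by case: (boolP (dist2 f)) => d //=; rewrite step2 // !mul0r.
pose beta c := af (Dc k5 c).
have hb a m : (a < k)%N -> (2 <= m <= k - 3)%N -> beta (w k5 (a + 2)%N) + beta (w k5 (a + m + 2)%N) = - a0.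
  move=> ha hm; rewrite /beta -g1_Dc // -g2_Dc //.
  by apply/eqP; rewrite -addr_eq0 addrC; apply/eqP; apply: step3.
have wo (c : 'I_k) : w k5 c = c by apply: val_inj => /=; rewrite modn_small.
have hbeta c : beta c = beta (w k5 (c + (k - 1))%N).
  have hc := ltn_ord c.
  have [a1 [ha1 hv]] : exists a1, (a1 < k)%N /\ ((a1 + 2 = c)%N \/ (a1 + 2 = c + k)%N).
    case: (leqP 2 c) => h; [exists (c - 2)%N | exists (c + k - 2)%N]; split; lia.
  have e1 : w k5 (a1 + 2)%N = c.
    rewrite -[RHS](wo c); apply: w_eqv; try lia.
    by case: ifP => ?; case: ifP => ?; lia.
  have e2 : w k5 (a1 + 2 + 2)%N = w k5 (c + 2)%N.
    apply: w_eqv; try lia.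
    by case: ifP => ?; case: ifP => ?; lia.
  have e3 : w k5 (c + (k - 3) + 2)%N = w k5 (c + (k - 1))%N.
    apply: w_eqv; try lia.
    case: ifP => ?; case: ifP => ?; lia.
  have h1 := hb a1 2 ha1 ltac:(lia).
  have h2 := hb c (k - 3)%N hc ltac:(lia).
  rewrite e1 e2 in h1; rewrite e3 in h2.
  by apply: (@addrI _ (beta (w k5 (c + 2)%N))); rewrite [LHS]addrC h1 h2.
have hall t : (t < k)%N -> beta (w k5 t) = beta (w k5 0).
  elim: t => [//|t IH] ht.
  rewrite hbeta.
  have -> : (w k5 t.+1 : nat) = t.+1 by rewrite /= modn_small.
  have -> : w k5 (t.+1 + (k - 1))%N = w k5 t.
    by apply: w_eqv; try lia; case: ifP => ?; case: ifP => ?; lia.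
  by apply: IH; lia.
have hc c : beta c = beta (w k5 0) by rewrite -(wo c) (hall _ (ltn_ord c)).
have l2 : beta (w k5 0) * 2%:R = - a0.
  have := hb 0%N 2%N ltac:(lia) ltac:(lia).
  by rewrite !hc mulr_natr mulr2n.
exists (beta (w k5 0)); split; first by rewrite l2 opprK.
move=> f; case: (boolP (dist2 f)) => d.
  have [c ec] := D_Dc k5 d.
  by rewrite /cvec ffunE d mulr1 ec; exact: (hc c).
by rewrite step2 // /cvec ffunE (negbTE d) mulr0.
Qed.

Definition xall : {ffun Ec k -> bool} := [ffun _ => true].
Definition xminus (g : Ec k) : {ffun Ec k -> bool} := [ffun f => f != g].

Lemma chordal_all : chordal (adjx xall).
Proof.
apply: (chordal_peo (rk := fun _ => 0%N)) => v a b _ _ ab _ _.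
by rewrite adjxE ab ffunE orbT.
Qed.

Lemma chordal_minus g : chordal (adjx (xminus g)).
Proof.
have [u0 [v0 [h1 h2 eg]]] := EcP k5 g.
apply: (chordal_peo (rk := fun u => nat_of_bool (u != u0))) => v a b.
rewrite !adjxE => /andP[av _] /andP[vb _] ab ra rb.
rewrite ab /=; case: (boolP (cyc_adj a b)) => //= nc.
rewrite ffunE eg mkE_eq //.
apply/negP => /orP[] /andP[/eqP ea /eqP eb]; subst a b.
- by move: ra; rewrite eqxx leqn0 eqb0 negbK => /eqP ev; rewrite ev eqxx in av.
- by move: rb; rewrite eqxx leqn0 eqb0 negbK => /eqP ev; rewrite ev eqxx in vb.
Qed.

Definition xO (i : option (Ec k)) := if i is Some g then xminus g else xall.

Lemma kernel0 (af : pt) (a0 : R) :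
  (forall i, a0 + \sum_f af f * ptx (xO i) f = 0) -> a0 = 0 /\ forall f, af f = 0.
Proof.
move=> H.
have hA : \sum_f af f * ptx xall f = \sum_f af f.
  by apply: eq_bigr => f _; rewrite ptxE ffunE mulr1.
have hM g : \sum_f af f * ptx (xminus g) f + af g = \sum_f af f.
  rewrite -[af g](sum1 af g) -big_split /=; apply: eq_bigr => f _.
  rewrite ptxE ffunE -mulrDr; case: eqP => _ /=; by rewrite ?add0r ?addr0 mulr1.
have H0 := H None; rewrite /= hA in H0.
have hf f : af f = 0.
  have := H (Some f); rewrite /= => h.
  have := hM f; move/(congr1 (fun t => a0 + t)); rewrite addrA h add0r H0 => ->.
  done.
split => //.
by move: H0; rewrite big1 ?addr0 // => f _; rewrite hf.
Qed.

Theorem main : facet_defining (conv (@XG R k)) (@lhs R k) 2%:R.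
Proof.
split; first exact: valid.
have N0 : (0 < N)%N by apply/card_gt0P; exists (e0 k5).
exists N.-1; split; split.
- have [q [hq hi]] := @extract0 R k _ (fun i => ptx (xO i)) kernel0 (N.-1.+2) ltac:(lia).
  exists q; split => // i; have [j ->] := hq i.
  apply: conv_XG; exists (xO j); split => //.
  by case: j => [g|]; [apply: chordal_minus | apply: chordal_all].
- by move=> q _; apply: full_upper; lia.
- have hb : (2%:R : R) != 0 by rewrite pnatr_eq0.
  have [q [hq hi]] := @extract R k _ (fun i => ptx (xI i)) cvec 2%:R hb kernel (N.-1.+1) ltac:(lia).
  exists q; split => // i; have [j ->] := hq i.
  have [hc hl] := xI_prop j.
  split => //; apply: conv_XG; by exists (xI j).
- move=> q hq; apply: (@face_upper R k _ q cvec 2%:R) => //; last by lia.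
  by rewrite pnatr_eq0.
  by move=> i; rewrite -lhs_lin; case: (hq i).
Qed.

End Final.

Theorem proposition4 (R : realFieldType) (k : nat) (hk : (5 <= k)%N) :
  facet_defining (conv (@XG R k)) (@lhs R k) 2%:R.
Proof. exact: (@main R k hk). Qed.
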